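(* For all $t>0$ and all Borel $V:\mathbb{R}^d\to\mathbb{R}$, $$r_*(V,t/2)\le(4\pi)^{-d/2}\|N(V,t)\|_\infty\le 2\,r_*(V,t/2).$$
   Context: $g(t,x,y)=(4\pi t)^{-d/2}e^{-|y-x|^2/(4t)}$; for $\alpha\in\mathbb{R}^d$, $p_\alpha(t,x,y)=g(t,x-2\alpha t,y)$. $r_*(V,t)=\sup_{\alpha,x\in\mathbb{R}^d}\int_0^t\int_{\mathbb{R}^d}p_\alpha(s,x,z)|V(z)|\,dz\,ds$. $N(V,t,x,y)=\int_0^{t/2}\int_{\mathbb{R}^d}\tau^{-d/2}e^{-|z-y+(\tau/t)(y-x)|^2/(4\tau)}|V(z)|\,dz\,d\tau+\int_{t/2}^t\int_{\mathbb{R}^d}(t-\tau)^{-d/2}e^{-|z-y+(\tau/t)(y-x)|^2/(4(t-\tau))}|V(z)|\,dz\,d\tau$, and $\|N(V,t)\|_\infty=\sup_{x,y\in\mathbb{R}^d}N(V,t,x,y)$. *)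

(* Defs.v *)
(* R^d is modelled as d.-tuple R, which
   carries the product (= Borel) sigma-algebra from measurable_structure.v. *)
From mathcomp Require Import all_boot all_order all_algebra.
From mathcomp Require Import all_classical all_reals all_analysis.
Set Implicit Arguments. Unset Strict Implicit. Unset Printing Implicit Defensive.
Import Order.TTheory GRing.Theory Num.Theory.
Local Open Scope ring_scope.
Local Open Scope classical_set_scope.

Section Defs.
Variable R : realType.

Definition sqn (d : nat) (v : 'I_d -> R) : R := \sum_(i < d) (v i) ^+ 2.

(* Lebesgue integral over R^d of a nonnegative function, as the iterated
   one-dimensional Lebesgue integral (equal to the integral against
   d-dimensional Lebesgue measure for nonnegative Borel integrands, Tonelli). *)
Fixpoint lebint (d : nat) : (d.-tuple R -> \bar R) -> \bar R :=
  match d with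
  | 0 => fun f => f [tuple]
  | n.+1 => fun f =>
      (\int[@lebesgue_measure R]_x lebint (fun y : n.-tuple R => f [tuple of x :: y]))%E
  end.

Definition gauss (d : nat) (t : R) (x y : d.-tuple R) : R :=
  powR (4 * pi * t) (- (d%:R / 2)) *
  expR (- sqn (fun i => tnth y i - tnth x i) / (4 * t)).

Definition palpha (d : nat) (a : d.-tuple R) (t : R) (x y : d.-tuple R) : R :=
  gauss t (mktuple (fun i => tnth x i - 2 * tnth a i * t)) y.

Definition rstar (d : nat) (V : d.-tuple R -> R) (t : R) : \bar R :=
  ereal_sup [set r | exists a x : d.-tuple R, r =
    (\int[@lebesgue_measure R]_(s in `]0%R, t[)
       lebint (fun z => (palpha a s x z)%:E * (`|V z|)%:E))%E].

Definition Nker (d : nat) (s c : R) (x y z : d.-tuple R) : R :=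
  powR s (- (d%:R / 2)) *
  expR (- sqn (fun i => tnth z i - tnth y i + c * (tnth y i - tnth x i)) / (4 * s)).

Definition Nfun (d : nat) (V : d.-tuple R -> R) (t : R) (x y : d.-tuple R) : \bar R :=
  ((\int[@lebesgue_measure R]_(tau in `]0%R, (t / 2)%R[)
      lebint (fun z => (Nker tau (tau / t) x y z)%:E * (`|V z|)%:E))
   +
   (\int[@lebesgue_measure R]_(tau in `](t / 2)%R, t[)
      lebint (fun z => (Nker (t - tau) (tau / t) x y z)%:E * (`|V z|)%:E)))%E.

Definition Nsup (d : nat) (V : d.-tuple R -> R) (t : R) : \bar R :=
  ereal_sup [set r | exists x y : d.-tuple R, r = Nfun V t x y].

End Defs.

(* Main.v *)
From HB Require Import structures.
Require Import Defs.
From mathcomp Require Import all_boot all_order all_algebra.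
From mathcomp Require Import all_classical all_reals all_analysis.
From mathcomp Require Import ring lra.
Import Order.TTheory GRing.Theory Num.Theory.
Local Open Scope ring_scope.
Local Open Scope classical_set_scope.
Section helpers1.
Local Open Scope ereal_scope.
Import HBNNSimple.

Lemma int_scale_le d (T : measurableType d) (R : realType)
  (mu : {measure set T -> \bar R}) (D : set T) (f : T -> \bar R) (k : R) :
  (0 < k)%R -> (forall x, D x -> 0 <= f x) ->
  \int[mu]_(x in D) (k%:E * f x) <= k%:E * \int[mu]_(x in D) f x.
Proof.
move=> k0 f0.
have kf0 : forall x, D x -> 0 <= k%:E * f x.
  by move=> x Dx; rewrite mule_ge0 ?f0// lee_fin ltW.
rewrite ge0_integralE// (ge0_integralE _ f0).
apply: ge_ereal_sup => _ [h hle <-].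
have ki0 : (0 <= k^-1)%R by rewrite invr_ge0 ltW.
pose h2 := scale_nnsfun h ki0.
have -> : sintegral mu h = k%:E * sintegral mu h2.
  rewrite /h2 /scale_nnsfun sintegralrM muleA -EFinM divff ?mul1e//.
  by rewrite gt_eqF.
rewrite lee_pmul2l ?lte_fin//; apply: ereal_sup_ubound; exists h2 => // x.
have := hle x; rewrite erestrict_scale /h2 /= => hx.
rewrite EFinM -(@lee_pmul2l _ k%:E) ?lte_fin// muleA -!EFinM mulfV ?gt_eqF// mul1r.
by [].
Qed.

Lemma int_scale d (T : measurableType d) (R : realType)
  (mu : {measure set T -> \bar R}) (D : set T) (f : T -> \bar R) (k : R) :
  (0 < k)%R -> (forall x, D x -> 0 <= f x) ->
  \int[mu]_(x in D) (k%:E * f x) = k%:E * \int[mu]_(x in D) f x.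
Proof.
move=> k0 f0; apply/eqP; rewrite eq_le int_scale_le//=.
have kf0 : forall x, D x -> 0 <= k%:E * f x.
  by move=> x Dx; rewrite mule_ge0 ?f0// lee_fin ltW.
have := @int_scale_le _ _ _ mu D (fun x => k%:E * f x) k^-1.
rewrite invr_gt0 => /(_ k0 kf0).
under eq_integral do rewrite muleA -EFinM mulVf ?gt_eqF// mul1e.
move=> H; rewrite -(@lee_pmul2l _ k^-1%:E) ?lte_fin ?invr_gt0//.
by rewrite muleA -EFinM mulVf ?gt_eqF// mul1e.
Qed.

Lemma lebint_ge0 (R : realType) (d : nat) (f : d.-tuple R -> \bar R) :
  (forall z, 0 <= f z) -> 0 <= lebint f.
Proof.
elim: d f => [|n IH] f f0 /=; first exact: f0.
by apply: integral_ge0 => x _; apply: IH.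
Qed.

Lemma lebint_scale (R : realType) (d : nat) (f : d.-tuple R -> \bar R) (k : R) :
  (0 < k)%R -> (forall z, 0 <= f z) ->
  lebint (fun z => k%:E * f z) = k%:E * lebint f.
Proof.
move=> k0; elim: d f => [|n IH] f f0 //=.
under eq_integral do rewrite IH//.
by rewrite int_scale// => x _; apply: lebint_ge0.
Qed.

End helpers1.

Section helpers2.
Local Open Scope ereal_scope.

Section refl.
Context (R : realType) (c : R).
Let mu := @lebesgue_measure R.
Definition reflc : measurableTypeR R -> measurableTypeR R := fun s : R => (c - s)%R.

Lemma measurable_reflc : measurable_fun setT reflc.
Proof.
rewrite /reflc; apply: measurable_realfun.measurable_funB => //.
Qed.

Lemma reflc_preimage_itv (a b : R) :
  reflc @^-1` `]a, b] = `[(c - b)%R, (c - a)%R[%classic.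
Proof.
apply/seteqP; split => x /=; rewrite /reflc !in_itv /= => /andP[h1 h2];
  apply/andP; split; lra.
Qed.

Lemma lebesgue_measure_reflc (A : set (measurableTypeR R)) : measurable A ->
  pushforward mu reflc A = mu A.
Proof.
move=> mA; apply/esym/lebesgue_measure_unique => //=; first exact: measurable_reflc.
move=> _ _ [[a b]] _ <-.
rewrite /pushforward reflc_preimage_itv/= !lebesgue_measure_itv/=.
rewrite !lte_fin -!EFinD.
have -> : ((c - b < c - a) = (a < b))%R by rewrite ltrD2l ltrN2.
by congr (if _ then _ else _); congr EFin; lra.
Qed.



Section reflh.
Import HBNNSimple.
Variable h : {nnsfun (measurableTypeR R) >-> R}.
Definition hr : measurableTypeR R -> R := fun s => h (reflc s).

Lemma hr_meas : measurable_fun setT hr.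
Proof. exact: measurableT_comp (measurable_reflc). Qed.
HB.instance Definition _ := isMeasurableFun.Build _ _ _ _ hr hr_meas.
Lemma hr_fin : finite_set (range hr).
Proof.
apply: sub_finite_set (fimfunP h) => _ [x _ <-]; exists (reflc x) => //.
Qed.
HB.instance Definition _ := FiniteImage.Build _ _ hr hr_fin.
Lemma hr_ge0 : forall x, (0 <= hr x)%R.
Proof. by move=> x; rewrite /hr fun_ge0. Qed.
HB.instance Definition _ := isNonNegFun.Build _ _ hr hr_ge0.
Definition hr_nnsfun : {nnsfun (measurableTypeR R) >-> R} := hr.

Lemma sintegral_hr : sintegral mu hr_nnsfun = sintegral mu h.
Proof.
rewrite /sintegral; apply: eq_fsbigr => x _; congr (_ * _).
rewrite -(@lebesgue_measure_reflc _ (measurable_sfunP h (measurable_set1 x))).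
by [].
Qed.
End reflh.

Lemma int_reflc_le (F : R -> \bar R) (a b : R) : (forall s, 0 <= F s) ->
  \int[mu]_(tau in `]a, b[) F (c - tau)%R <= \int[mu]_(s in `](c - b)%R, (c - a)%R[) F s.
Proof.
move=> F0; rewrite ge0_integralE// [X in _ <= X]ge0_integralE//.
apply: ge_ereal_sup => _ [h hle <-]; apply: ereal_sup_ubound.
exists (hr_nnsfun h); last exact: sintegral_hr.
move=> s; have := hle (c - s)%R; rewrite /= /hr /reflc /patch /=.
rewrite subKr.
have [H|H] := boolP ((c - b < s) && (s < c - a))%R.
  move: (H) => /andP[h1 h2].
  rewrite (@mem_set _ `]a, b[ (c - s)%R); last by rewrite /= in_itv /=; apply/andP; split; lra.
  by rewrite (@mem_set _ `](c - b)%R, (c - a)%R[ s)//= in_itv/= H.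
rewrite (@memNset _ `](c - b)%R, (c - a)%R[ s); last by rewrite /= in_itv /=; exact/negP.
have H' : ~~ ((a < c - s) && (c - s < b))%R.
  apply/negP => /andP[h1 h2]; move/negP: H; apply; apply/andP; split; lra.
by rewrite (@memNset _ `]a, b[ (c - s)%R)//= in_itv /=; exact/negP.
Qed.
End refl.

End helpers2.

Section ker.
Context (R : realType) (d : nat).
Let K : R := powR (4 * pi) (d%:R / 2).

Lemma Kpos : 0 < K.
Proof. by rewrite powR_gt0 // mulr_gt0 // pi_gt0. Qed.

Lemma gauss_ge0 (s : R) (w z : d.-tuple R) : 0 <= gauss s w z.
Proof. by rewrite /gauss mulr_ge0 ?powR_ge0 // expR_ge0. Qed.

Lemma Nker_gauss (s c : R) (x y z w : d.-tuple R) : 0 < s ->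
  (forall i, tnth z i - tnth y i + c * (tnth y i - tnth x i) = tnth z i - tnth w i) ->
  Nker s c x y z = K * gauss s w z.
Proof.
move=> s0 H; rewrite /Nker /gauss.
have -> : sqn (fun i => tnth z i - tnth y i + c * (tnth y i - tnth x i)) =
          sqn (fun i => tnth z i - tnth w i).
  by apply: eq_bigr => i _; rewrite H.
rewrite mulrA; congr (_ * _).
have p0 : 0 < 4 * pi :> R by rewrite mulr_gt0 // pi_gt0.
rewrite powRM ?ltW // /K mulrA !powRN mulfV ?mul1r //.
by rewrite gt_eqF // powR_gt0.
Qed.
End ker.

Section main.
Context (R : realType) (d : nat) (V : d.-tuple R -> R) (t : R).
Hypothesis t0 : 0 < t.
Local Open Scope ereal_scope.
Let K : R := powR (4 * pi) (d%:R / 2).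
Let mu := @lebesgue_measure R.

Definition Frs (a w : d.-tuple R) (s : R) : \bar R :=
  lebint (fun z => (palpha a s w z)%:E * (`|V z|)%:E).

Lemma Frs_ge0 a w s : 0 <= Frs a w s.
Proof.
apply: lebint_ge0 => z; rewrite mule_ge0 // lee_fin //.
exact: gauss_ge0.
Qed.

Lemma Nfirst (x y : d.-tuple R) :
  \int[mu]_(tau in `]0%R, (t / 2)%R[)
      lebint (fun z => (Nker tau (tau / t) x y z)%:E * (`|V z|)%:E) =
  K%:E * \int[mu]_(tau in `]0%R, (t / 2)%R[)
      Frs (mktuple (fun i => (tnth y i - tnth x i) / (2 * t))%R) y tau.
Proof.
rewrite -int_scale ?Kpos //; last by move=> *; exact: Frs_ge0.
apply: eq_integral => tau; rewrite inE /= in_itv /= => /andP[tau0 _].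
rewrite /Frs -lebint_scale ?Kpos //; last first.
  by move=> z; rewrite mule_ge0 // lee_fin; exact: gauss_ge0.
congr lebint; apply: funext => z; rewrite muleA -EFinM /palpha.
rewrite (@Nker_gauss _ _ _ _ x y z (mktuple (fun i => tnth y i - 2 * tnth (mktuple (fun i => (tnth y i - tnth x i) / (2 * t))%R) i * tau)))%R //.
move=> i; rewrite !tnth_mktuple; field.
by rewrite gt_eqF.
Qed.

Lemma Nsecond (x y : d.-tuple R) :
  \int[mu]_(tau in `](t / 2)%R, t[)
      lebint (fun z => (Nker (t - tau) (tau / t) x y z)%:E * (`|V z|)%:E) <=
  K%:E * \int[mu]_(s in `]0%R, (t / 2)%R[)
      Frs (mktuple (fun i => (tnth x i - tnth y i) / (2 * t))%R) x s.
Proof.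
set b := mktuple _.
have -> : \int[mu]_(tau in `](t / 2)%R, t[)
      lebint (fun z => (Nker (t - tau) (tau / t) x y z)%:E * (`|V z|)%:E) =
  K%:E * \int[mu]_(tau in `](t / 2)%R, t[) Frs b x (t - tau)%R.
  rewrite -int_scale ?Kpos //; last by move=> *; exact: Frs_ge0.
  apply: eq_integral => tau; rewrite inE /= in_itv /= => /andP[_ taut].
  rewrite /Frs -lebint_scale ?Kpos //; last first.
    by move=> z; rewrite mule_ge0 // lee_fin; exact: gauss_ge0.
  congr lebint; apply: funext => z; rewrite muleA -EFinM /palpha.
  rewrite (@Nker_gauss _ _ _ _ x y z (mktuple (fun i => tnth x i - 2 * tnth b i * (t - tau))))%R //.
    by rewrite subr_gt0.
  move=> i; rewrite !tnth_mktuple; field.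
  by rewrite gt_eqF.
apply: lee_wpmul2l; first by rewrite lee_fin ltW // Kpos.
have := @int_reflc_le R t (Frs b x) (t / 2)%R t (Frs_ge0 b x).
by rewrite subrr (_ : (t - t / 2 = t / 2)%R) //; field.
Qed.
End main.

Theorem lemma2p1 (R : realType) (d : nat) (t : R) (V : d.-tuple R -> R) :
  0 < t -> measurable_fun [set: d.-tuple R] V ->
  (rstar V (t / 2) <= (powR (4 * pi) (- (d%:R / 2)))%:E * Nsup V t)%E /\
  ((powR (4 * pi) (- (d%:R / 2)))%:E * Nsup V t <= 2%:E * rstar V (t / 2))%E.
Proof.
move=> t0 _.
set c0 := powR (4 * pi) (- (d%:R / 2)).
pose K : R := powR (4 * pi) (d%:R / 2).
have K0 : 0 < K by rewrite powR_gt0 // mulr_gt0 // pi_gt0.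
have cK : c0 * K = 1 by rewrite /c0 powRN mulVf // gt_eqF.
have c00 : 0 <= c0 by rewrite powR_ge0.
have r0 : (0 <= rstar V (t / 2))%E.
  apply: le_trans (ereal_sup_ubound _); last first.
    by exists (nseq_tuple d 0%R), (nseq_tuple d 0%R).
  by apply: integral_ge0 => s _; exact: Frs_ge0.
split.
- apply: ge_ereal_sup => _ [a [w ->]].
  pose x := mktuple (fun i => tnth w i - 2 * tnth a i * t).
  have ea : mktuple (fun i => (tnth w i - tnth x i) / (2 * t)) = a.
    apply: eq_from_tnth => i; rewrite !tnth_mktuple; field.
    by rewrite gt_eqF.
  have H : (K%:E * \int[@lebesgue_measure R]_(s in `]0%R, (t / 2)%R[) Frs R d V a w s
            <= Nsup V t)%E.
    apply: le_trans (ereal_sup_ubound _); last by exists x, w.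
    rewrite /Nfun Nfirst // ea; apply: leeDl.
    apply: integral_ge0 => tau _; apply: lebint_ge0 => z.
    rewrite mule_ge0 // lee_fin /Nker mulr_ge0 ?powR_ge0 // expR_ge0.
  have e1 : (1 = c0%:E * K%:E)%E by rewrite -EFinM cK.
  rewrite -[X in (X <= _)%E]mul1e [X in (X * _ <= _)%E]e1 -muleA.
  by apply: lee_wpmul2l; rewrite ?lee_fin.
- have H : (Nsup V t <= K%:E * (rstar V (t / 2) + rstar V (t / 2)))%E.
    apply: ge_ereal_sup => _ [x [y ->]].
    rewrite /Nfun Nfirst // [X in (_ <= X)%E]ge0_muleDr //.
    apply: leeD.
      apply: lee_wpmul2l; first by rewrite lee_fin ltW.
      by apply: ereal_sup_ubound; exists (mktuple (fun i => (tnth y i - tnth x i) / (2 * t))), y.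
    apply: le_trans (Nsecond _ _ _ _ t0 x y) _.
    apply: lee_wpmul2l; first by rewrite lee_fin ltW.
    by apply: ereal_sup_ubound; exists (mktuple (fun i => (tnth x i - tnth y i) / (2 * t))), x.
  have -> : (2%:E * rstar V (t / 2) = c0%:E * (K%:E * (rstar V (t / 2) + rstar V (t / 2))))%E.
    rewrite muleA -EFinM cK mul1e.
    case: (rstar V (t / 2)) r0 => [r||] // _.
      by rewrite -EFinM -EFinD; congr EFin; ring.
    by rewrite mulry gtr0_sg ?mul1e // ltr0n.
  by apply: lee_wpmul2l; rewrite ?lee_fin.
Qed.
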